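(* Let $G=(V,E)$ be a finite, connected, simple, undirected, unweighted graph and $i\sim j$ an edge with $d_i\le d_j$. Let $\Omega_j=\sharp_\Delta(i,j)\cup\{j\}$. If $\mathrm{Ric}(i,j)\le-2+\delta$ for some $0<\delta<(1+\gamma_{\max}(i,j))^{-1}$, then $$\frac{1}{|\Omega_j|}\sum_{k\in\Omega_j}b(k)\ \ge\ \delta^{-1}.$$
   Context: Betweenness centrality: $b(k)=\sum_{s,t\in V,\ s\ne t,\ s\ne k,\ t\ne k}\sigma_{st}(k)/\sigma_{st}$, where $\sigma_{st}$ is the number of shortest paths from $s$ to $t$ and $\sigma_{st}(k)$ the number of those passing through $k$. For an edge $i\sim j$ with degrees $d_i,d_j$ and neighbour sets $S_1(\cdot)$: $\sharp_\Delta=S_1(i)\cap S_1(j)$; $\sharp_\square^i=\{k\in S_1(i)\setminus (S_1(j)\cup\{j\}) : \exists\, w\in (S_1(k)\cap S_1(j))\setminus (S_1(i)\cup\{i\})\}$, $\sharp_\square^j$ symmetric; $\gamma_{\max}=\max\big\{\max_{k\in\sharp_\square^i}|(S_1(k)\cap S_1(j))\setminus(S_1(i)\cup\{i\})|,\ \max_{w\in\sharp_\square^j}|(S_1(w)\cap S_1(i))\setminus(S_1(j)\cup\{j\})|\big\}$, with $\gamma_{\max}=0$ if $\sharp_\square^i=\emptyset$. $\mathrm{Ric}(i,j)=0$ if $\min\{d_i,d_j\}=1$, otherwise $\mathrm{Ric}(i,j)=\frac{2}{d_i}+\frac{2}{d_j}-2+\frac{2|\sharp_\Delta|}{\max\{d_i,d_j\}}+\frac{|\sharp_\Delta|}{\min\{d_i,d_j\}}+\frac{\gamma_{\max}^{-1}}{\max\{d_i,d_j\}}(|\sharp_\square^i|+|\sharp_\square^j|)$,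 the last term being $0$ when $\sharp_\square^i=\emptyset$. *)

(* Defs.v *)
From HB Require Import structures.
From mathcomp Require Import all_boot all_order all_algebra.
Set Implicit Arguments. Unset Strict Implicit. Unset Printing Implicit Defensive.
Import Order.TTheory GRing.Theory Num.Theory.

Section Graph.
Variable V : finType.
Variable e : rel V.

Definition walks (n : nat) (s t : V) : {set n.-tuple V} :=
  [set p : n.-tuple V | path e s p && (last s p == t)].

(* Graph distance: least n < #|V| admitting a walk of length n
   (in a connected graph such an n always exists). *)
Definition gdist (s t : V) : nat :=
  find (fun n => [exists p : n.-tuple V, p \in walks n s t]) (iota 0 #|V|).

Definition sigma (s t : V) : nat := #|walks (gdist s t) s t|.

(* sigma_st(k): number of shortest paths from s to t through k
   (k is visited by the path; used only for k <> s, k <> t). *)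
Definition sigma_via (s t k : V) : nat :=
  #|[set p in walks (gdist s t) s t | k \in (tval p)]|.

Open Scope ring_scope.

Definition betweenness (R : fieldType) (k : V) : R :=
  \sum_(s : V | s != k) \sum_(t : V | (t != s) && (t != k))
     ((sigma_via s t k)%:R / (sigma s t)%:R).

Close Scope ring_scope.

Definition S1 (x : V) : {set V} := [set y | e x y].
Definition deg (x : V) : nat := #|S1 x|.

Definition tri (i j : V) : {set V} := S1 i :&: S1 j.

Definition sqwit (i j k : V) : {set V} :=
  (S1 k :&: S1 j) :\: (S1 i :|: [set i]).

Definition sq (i j : V) : {set V} :=
  [set k in S1 i :\: (S1 j :|: [set j]) | sqwit i j k != set0].

Definition gamma_max (i j : V) : nat :=
  maxn (\max_(k in sq i j) #|sqwit i j k|) (\max_(w in sq j i) #|sqwit j i w|).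

Open Scope ring_scope.

Definition Ric (R : fieldType) (i j : V) : R :=
  if minn (deg i) (deg j) == 1%N then 0 else
  let di := (deg i)%:R in let dj := (deg j)%:R in
  let dmax := (maxn (deg i) (deg j))%:R in
  let dmin := (minn (deg i) (deg j))%:R in
  let t := (#|tri i j|)%:R in
  2 / di + 2 / dj - 2 + 2 * t / dmax + t / dmin
  + (if sq i j == set0 then 0
     else ((gamma_max i j)%:R)^-1 / dmax * ((#|sq i j|)%:R + (#|sq j i|)%:R)).

Close Scope ring_scope.
End Graph.

(* Main.v *)
Require Import Defs.
From mathcomp Require Import all_boot all_order all_algebra.
From mathcomp Require Import ring lra zify.
Import Order.TTheory GRing.Theory Num.Theory.
Set Implicit Arguments. Unset Strict Implicit.

Section Comb.
Variable V : finType.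
Variable e : rel V.
Hypothesis e_sym : symmetric e.
Hypothesis e_irr : irreflexive e.

Definition w2 (w x : V) : 2.-tuple V := [tuple x; w].

Lemma w2_inj w : injective (w2 w).
Proof. by move=> x y /(congr1 val) [->]. Qed.

Lemma walks2E (i w : V) : i != w ->
  walks e 2 i w = w2 w @: (S1 e i :&: S1 e w).
Proof.
move=> niw; apply/setP => p; rewrite inE.
apply/idP/imsetP.
- case: p => [[|x [|y [|]]] //= Hp]; rewrite andbT => /andP[/andP[ex ey] /eqP yw].
  subst y; exists x; first by rewrite !inE ex e_sym.
  by apply: val_inj.
- case=> x; rewrite !inE => /andP[ex ew] ->.
  by rewrite /= ex andbT e_sym ew /=.
Qed.

Lemma gdist2 (i w x : V) : ~~ e i w -> i != w -> e i x -> e x w ->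
  gdist e i w = 2.
Proof.
move=> niw ineqw eix exw.
have c3 : 2 < #|V|.
  have : #|[set i; x; w]| <= #|V| by apply: max_card.
  apply: leq_trans.
  rewrite (setUC _ [set w]) cardsU1 cards2 !inE.
  have -> : (w == x) = false by apply/negbTE/eqP=> E; subst; rewrite e_irr in exw.
  have -> : (i != x) by apply/eqP=> E; subst; rewrite e_irr in eix.
  by rewrite eq_sym (negbTE ineqw).
rewrite /gdist; case: #|V| c3 => [|[|[|n]]] // _.
rewrite /=.
have -> : [exists p : 0.-tuple V, p \in walks e 0 i w] = false.
  apply/negbTE/existsP => -[p]; rewrite inE tuple0 /= => /eqP E.
  by rewrite E eqxx in ineqw.
have -> : [exists p : 1.-tuple V, p \in walks e 1 i w] = false.
  apply/negbTE/existsP => -[[[|y [|]]] //= Hp]; rewrite inE /= andbT => /andP[ey /eqP E].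
  by subst; rewrite ey in niw.
have -> : [exists p : 2.-tuple V, p \in walks e 2 i w] = true.
  apply/existsP; exists (w2 w x); rewrite walks2E //; apply: imset_f.
  by rewrite !inE eix e_sym exw.
by [].
Qed.

Lemma sigma2 (i w x : V) : ~~ e i w -> i != w -> e i x -> e x w ->
  sigma e i w = #|S1 e i :&: S1 e w|.
Proof.
move=> h1 h2 h3 h4; rewrite /sigma (gdist2 h1 h2 h3 h4) walks2E //.
by rewrite card_imset //; apply: w2_inj.
Qed.

Lemma sigma_via2 (i w x k : V) : ~~ e i w -> i != w -> e i x -> e x w ->
  k != w -> sigma_via e i w k = (k \in S1 e i :&: S1 e w).
Proof.
move=> h1 h2 h3 h4 kw; rewrite /sigma_via (gdist2 h1 h2 h3 h4) walks2E //.
have -> : [set p in w2 w @: (S1 e i :&: S1 e w) | k \in tval p] =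
          w2 w @: (S1 e i :&: S1 e w :&: [set k]).
  apply/setP => p; rewrite !inE; apply/andP/imsetP.
  - case=> /imsetP[y Hy ->]; rewrite /= !inE (negbTE kw) orbF => /eqP ->.
    by exists y => //; rewrite in_setI Hy in_set1 eqxx.
  - case=> y; rewrite in_setI in_set1 => /andP[Hy /eqP E] ->; rewrite -E; split.
      exact: (imset_f (w2 w) Hy).
    by rewrite /= !inE eqxx.
rewrite card_imset; last by apply: w2_inj.
case: (boolP (k \in S1 e i :&: S1 e w)) => Hk.
  have -> : S1 e i :&: S1 e w :&: [set k] = [set k].
    by apply/setIidPr; rewrite sub1set.
  by rewrite cards1.
have -> : S1 e i :&: S1 e w :&: [set k] = set0.
  apply/setP => y; rewrite in_setI in_set1 in_set0.
  by case: eqP => [->|]; [rewrite andbT; apply/negbTE | rewrite andbF].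
by rewrite cards0.
Qed.

Local Open Scope ring_scope.
Lemma sum_sub_le (R : realFieldType) (A : {set V}) (P : pred V) (F : V -> R) :
  (forall t, t \in A -> P t) -> (forall t, 0 <= F t) ->
  \sum_(t in A) F t <= \sum_(t | P t) F t.
Proof.
move=> AP F0; rewrite [leRHS](bigID (fun t => t \in A)) /=.
have -> : \sum_(t | P t && (t \in A)) F t = \sum_(t in A) F t.
  by apply: eq_bigl => t; case: (boolP (t \in A)) => H; rewrite ?andbT ?andbF // AP.
by rewrite lerDl; apply: sumr_ge0.
Qed.

Lemma bet_lower (R : realFieldType) (i j : V) : e i j ->
  \sum_(w in S1 e j :\: (S1 e i :|: [set i]))
     ((#|(tri e i j :|: [set j]) :&: S1 e w|)%:R / (#|S1 e i :&: S1 e w|)%:R : R)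
  <= \sum_(k in tri e i j :|: [set j]) betweenness e R k.
Proof.
move=> hij.
set Om := tri e i j :|: [set j].
set A := S1 e j :\: (S1 e i :|: [set i]).
have OmS : forall k, k \in Om -> e i k.
  move=> k; rewrite /Om /tri !inE => /orP[/andP[]//|/eqP->//].
have AP : forall w, w \in A -> [/\ e j w, ~~ e i w & i != w].
  move=> w; rewrite /A !inE negb_or => /andP[/andP[h1 h2] h3].
  by split => //; rewrite eq_sym.
pose f := fun s t k => ((sigma_via e s t k)%:R / (sigma e s t)%:R : R).
have f0 : forall s t k, 0 <= f s t k by move=> *; rewrite /f divr_ge0.
have step1 : forall k, k \in Om -> \sum_(w in A) f i w k <= betweenness e R k.
  move=> k kO; rewrite /betweenness.
  have ik : i != k by apply/eqP => E; subst k; move: (OmS i kO); rewrite e_irr.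
  rewrite [leRHS](bigD1 i) //=.
  rewrite -[leLHS]addr0. apply: lerD; last first.
    by apply: sumr_ge0 => s _; apply: sumr_ge0 => t _; apply: f0.
  apply: sum_sub_le => [t tA|t]; last by apply: f0.
  have [h1 h2 h3] := AP t tA; rewrite eq_sym h3 /=.
  by apply/eqP => E; subst t; rewrite OmS in h2.
apply: le_trans; last by apply: ler_sum => k kO; apply: step1.
rewrite exchange_big /=.
apply: ler_sum => w wA.
have [h1 h2 h3] := AP w wA.
have ejw : e j w := h1.
rewrite /f -mulr_suml -natr_sum.
rewrite (sigma2 h2 h3 hij ejw).
have -> : (\sum_(k in Om) sigma_via e i w k = \sum_(k in Om) (k \in S1 e i :&: S1 e w))%N.
  apply: eq_bigr => k kO; apply: (sigma_via2 h2 h3 hij ejw).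
  by apply/eqP => E; subst k; rewrite OmS in h2.
have -> : (\sum_(k in Om) ((k \in S1 e i :&: S1 e w) : nat) = #|Om :&: S1 e w|)%N.
  rewrite -sum1_card [RHS]big_mkcond [LHS]big_mkcond /=; apply: eq_bigr => k _.
  rewrite !in_setI; case: (boolP (k \in Om)) => kO /=; last by [].
  rewrite [k \in S1 e i]inE (OmS k kO) /=; by case: (k \in S1 e w).
by [].
Qed.
End Comb.

Local Open Scope ring_scope.

Lemma real_final (R : realFieldType) (d G X U t D : R) :
  0 < d -> d * (1 + G) < 1 -> 0 <= G -> (0 < X -> 1 <= G) -> 0 <= X -> 0 <= U -> 0 <= t ->
  D = U + X + t + 1 -> 2 * (t + 1) + X / G <= d * D ->
  t + 1 <= d * (X / (1 + G) + U).
Proof.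
move=> d0 dG G0 XG X0 U0 t0 DE hD.
have d1 : d <= 1 by nra.
have [X00|Xp] := eqVneq X 0.
  subst X; rewrite !mul0r addr0 add0r in hD *; subst D; nra.
have Xp' : 0 < X by rewrite lt_def Xp X0.
have G1 := XG Xp'.
have Gp : 0 < G by lra.
set p := (1 + G)^-1; set q := G^-1.
have hp : p * (1 + G) = 1 by rewrite mulVf //; apply/lt0r_neq0; lra.
have hq : q * G = 1 by rewrite mulVf //; apply/lt0r_neq0; lra.
have p0 : 0 < p by rewrite invr_gt0; lra.
have q0 : 0 < q by rewrite invr_gt0; lra.
rewrite -/p in hD *; rewrite -/q in hD.
clearbody p q.
have dp : d <= p.
  have : d * (1 + G) * p <= 1 * p by rewrite ler_pM2r //; lra.
  by rewrite -mulrA [(1+G) * p]mulrC hp mulr1 mul1r.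
have key : d * (1 - p) <= q.
  have h1 : d * (1 - p) <= p * (1 - p) by apply: ler_wpM2r; nra.
  have h2 : p * (1 - p) <= q.
    have pG : 1 - p = p * G by rewrite -[in LHS]hp; ring.
    have p1 : p <= 1 by nra.
    rewrite pG.
    have : p * (p * G) * G <= q * G.
      have -> : p * (p * G) * G = (p * G) * (p * G) by ring.
      rewrite hq -pG. nra.
    by rewrite ler_pM2r.
  lra.
have k1 : X * (d * (1 - p)) <= X * q by apply: ler_wpM2l.
have k2 : d * (t + 1) <= t + 1 by rewrite -[leRHS]mul1r; apply: ler_wpM2r; lra.
subst D.
have -> : d * (X * p + U) = d * (U + X + t + 1) - d * (t + 1) - X * (d * (1 - p)) by ring.
lra.
Qed.

Theorem mainTheorem10 (R : realFieldType) (V : finType) (e : rel V)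
  (e_sym : symmetric e) (e_irr : irreflexive e)
  (e_conn : forall x y : V, connect e x y)
  (i j : V) (hij : e i j) (hdeg : (deg e i <= deg e j)%N)
  (delta : R) (hd0 : 0 < delta)
  (hd1 : delta < (1 + (gamma_max e i j)%:R)^-1)
  (hRic : Ric e R i j <= -2 + delta) :
  let Omega := tri e i j :|: [set j] in
  (#|Omega|%:R)^-1 * \sum_(k in Omega) betweenness e R k >= delta^-1.
Proof.
cbv zeta; set Om := tri e i j :|: [set j].
set A := S1 e j :\: (S1 e i :|: [set i]).
set g := gamma_max e i j.
set G : R := g%:R.
have G0 : 0 <= G by rewrite ler0n.
have dG : delta * (1 + G) < 1.
  by rewrite -ltr_pdivlMr ?div1r //; rewrite ltr_pwDl ?ltr01 //.
have OmS : forall k, k \in Om -> e i k.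
  move=> k; rewrite /Om /tri !inE => /orP[/andP[]//|/eqP->//].
have AP : forall w, w \in A -> [/\ e j w, ~~ e i w & i != w].
  move=> w; rewrite /A !inE negb_or => /andP[/andP[h1 h2] h3].
  by split => //; rewrite eq_sym.
have sqA : sq e j i \subset A.
  by apply/subsetP => w; rewrite /sq inE => /andP[].
have csplit : forall w, w \in A ->
    #|S1 e i :&: S1 e w| = (#|Om :&: S1 e w| + #|sqwit e j i w|)%N.
  move=> w wA; rewrite -(cardsID Om (S1 e i :&: S1 e w)); congr (_ + _)%N.
    apply: eq_card => y; rewrite /Om /tri !inE.
    case: (eqVneq y j) => [->|_]; rewrite ?hij /=.
      by rewrite !orbT !andbT.
    by rewrite !orbF; case: (e i y); case: (e w y); case: (e j y).
  apply: eq_card => y; rewrite /sqwit /Om /tri !inE.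
  by case: (e i y); case: (e w y); case: (e j y); case: (y == j).
have aj : forall w, w \in A -> (1 <= #|Om :&: S1 e w|)%N.
  move=> w wA; rewrite card_gt0; apply/set0Pn; exists j.
  have [h1 _ _] := AP w wA.
  by rewrite !inE eqxx orbT e_sym.
have term : forall w, w \in A ->
   (if w \in sq e j i then (1 + G)^-1 else 1) <=
   (#|Om :&: S1 e w|)%:R / (#|S1 e i :&: S1 e w|)%:R.
  move=> w wA; rewrite csplit // natrD.
  have a1 : 1 <= (#|Om :&: S1 e w|)%:R :> R by rewrite ler1n aj.
  case: ifP => wsq.
    have cg : (#|sqwit e j i w|)%:R <= G.
      rewrite ler_nat; apply: leq_trans (leq_maxr _ _).
      exact: (@leq_bigmax_cond _ (fun x => x \in sq e j i) (fun w => #|sqwit e j i w|) w wsq).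
    have c0 : 0 <= (#|sqwit e j i w|)%:R :> R by rewrite ler0n.
    rewrite ler_pdivlMr; last by lra.
    rewrite mulrC -/(_ / _) ler_pdivrMr; last by lra.
    nra.
  have -> : sqwit e j i w = set0.
    apply/eqP; move: wsq; rewrite /sq inE wA /=.
    by case: (sqwit e j i w == set0).
  rewrite cards0 addr0 divff //; apply/lt0r_neq0; lra.
have := bet_lower e_sym e_irr R hij.
rewrite -/A -/Om => hbl.
set X := #|sq e j i|.
set U := #|A :\: sq e j i|.
have sumh : \sum_(w in A) (if w \in sq e j i then (1 + G)^-1 else 1)
            = X%:R / (1 + G) + U%:R.
  rewrite (big_setID (sq e j i)) /=.
  have -> : A :&: sq e j i = sq e j i by apply/setIidPr.
  rewrite (eq_bigr (fun _ => (1 + G)^-1)); last by move=> w ->.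
  rewrite [X in _ + X](eq_bigr (fun _ => 1)); last first.
    by move=> w; rewrite inE => /andP[/negbTE ->].
  rewrite !sumr_const; congr (_ + _); by rewrite -[(1 + G)^-1 *+ _]mulr_natl mulrC.
have hsum : X%:R / (1 + G) + U%:R <= \sum_(k in Om) betweenness e R k.
  by rewrite -sumh; apply: le_trans hbl; apply: ler_sum => w wA; apply: term.
set T := #|tri e i j|.
have cOm : #|Om| = T.+1.
  by rewrite /Om setUC cardsU1 /tri !inE e_irr andbF.
have cdeg : deg e j = (U + X + T + 1)%N.
  rewrite /deg -(cardsID (S1 e i :|: [set i]) (S1 e j)) -/A.
  rewrite -(cardsID (sq e j i) A) -/U.
  have -> : A :&: sq e j i = sq e j i by apply/setIidPr.
  have -> : S1 e j :&: (S1 e i :|: [set i]) = i |: tri e i j.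
    apply/setP => y; rewrite /tri !inE.
    case: (eqVneq y i) => [->|_]; first by rewrite e_sym hij orbT.
    by rewrite orbF /= andbC.
  rewrite cardsU1 /tri !inE e_irr /=; rewrite -/T /X; lia.
have sqsym : sq e i j = set0 -> sq e j i = set0.
  move=> H; apply/eqP; rewrite -subset0; apply/subsetP => w.
  rewrite /sq !inE negb_or => /andP[/andP[/andP[ewi wi] ejw]].
  case/set0Pn => k; rewrite /sqwit !inE negb_or => /andP[/andP[ekj kj] /andP[ewk eik]].
  have : k \in sq e i j.
    rewrite /sq !inE negb_or eik ekj kj /=.
    apply/set0Pn; exists w; rewrite /sqwit !inE negb_or ewi wi e_sym ewk ejw.
    by [].
  by rewrite H inE.
have XG : (0 < X)%N -> (1 <= g)%N.
  rewrite /X card_gt0 => /set0Pn[w wsq].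
  apply: leq_trans (leq_maxr _ _).
  apply: leq_trans (@leq_bigmax_cond _ (fun x => x \in sq e j i) (fun w => #|sqwit e j i w|) w wsq).
  by rewrite card_gt0; move: wsq; rewrite /sq inE => /andP[].
have Dj0 : 0 < (deg e j)%:R :> R.
  rewrite ltr0n /deg card_gt0; apply/set0Pn; exists i; by rewrite inE e_sym.
have key : 2 * (T%:R + 1) + X%:R / G <= delta * (deg e j)%:R.
  move: hRic; rewrite /Ric (minn_idPl hdeg) (maxn_idPr hdeg).
  case: ifP => [_ H|_]; first by exfalso; nra.
  cbv zeta; rewrite -/T.
  set Di := (deg e i)%:R; set Dj := (deg e j)%:R.
  set sqt := (if _ then _ else _) => H.
  have h1 : 0 <= 2 / Di by rewrite divr_ge0 // ler0n.
  have h2 : 0 <= T%:R / Di by rewrite divr_ge0 // ler0n.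
  have h3 : X%:R / G <= sqt * Dj.
    rewrite /sqt; case: ifP => [/eqP/sqsym E|_].
      by rewrite /X E cards0 mul0r mul0r.
    rewrite mulrAC divfK; last by apply/lt0r_neq0.
    rewrite [X%:R / G]mulrC ler_wpM2l ?invr_ge0 // lerDr ler0n //.
  have h4 : 2 / Dj + 2 * T%:R / Dj = (2 * (T%:R + 1)) / Dj by rewrite -mulrDl; congr (_ * _); ring.
  have h5 : 2 * (T%:R + 1) / Dj + sqt <= delta by lra.
  have : (2 * (T%:R + 1) / Dj + sqt) * Dj <= delta * Dj by rewrite ler_pM2r.
  rewrite mulrDl -mulrA mulVf ?mulr1; last by apply/lt0r_neq0.
  lra.
have cdegR : (deg e j)%:R = U%:R + X%:R + T%:R + 1 :> R by rewrite cdeg !natrD.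
have XG' : 0 < (X%:R : R) -> 1 <= G.
  by rewrite ltr0n => /XG; rewrite /G ler1n.
have fin := @real_final R delta G X%:R U%:R T%:R _ hd0 dG G0 XG' (ler0n _ X) (ler0n _ U) (ler0n _ T) cdegR key.
rewrite cOm ler_pdivlMl ?ltr0n // -[_ * delta^-1]/(_ / _) ler_pdivrMr //.
rewrite -natr1 [leRHS]mulrC; apply: le_trans fin _.
by rewrite ler_pM2l.
Qed.
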